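(* Let $H$ be a separable infinite-dimensional Hilbert space, $2<p<\infty$, $\varepsilon>0$, and let $\{e_n\}$ be any orthonormal basis of $H$. Then there exists an operator $S\in S_{p+\varepsilon}\setminus S_p$ such that $\{\|Se_n\|\}\in\ell^p$.
   Context: For a compact operator $T$, its singular values $\lambda_1\ge\lambda_2\ge\cdots$ are the positive eigenvalues of $(T^*T)^{1/2}$, repeated according to multiplicity. For $0<p<\infty$, $S_p$ is the set of compact $T$ with $\{\lambda_n\}\in\ell^p$. *)

(* Defs.v *)
From Stdlib Require Import Reals Lra List.
Import ListNotations.
Open Scope R_scope.

Record Cpx := mkCpx { cre : R; cim : R }.
Definition C0 : Cpx := mkCpx 0 0.
Definition C1 : Cpx := mkCpx 1 0.
Definition RtoC (r : R) : Cpx := mkCpx r 0.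
Definition Cadd (a b : Cpx) : Cpx := mkCpx (cre a + cre b) (cim a + cim b).
Definition Cmul (a b : Cpx) : Cpx :=
  mkCpx (cre a * cre b - cim a * cim b) (cre a * cim b + cim a * cre b).
Definition Cconj (a : Cpx) : Cpx := mkCpx (cre a) (- cim a).

Record Hilbert := {
  hcar :> Type;
  hzero : hcar;
  hadd : hcar -> hcar -> hcar;
  hopp : hcar -> hcar;
  hscal : Cpx -> hcar -> hcar;
  hinner : hcar -> hcar -> Cpx;
  hadd_assoc : forall x y z, hadd x (hadd y z) = hadd (hadd x y) z;
  hadd_comm : forall x y, hadd x y = hadd y x;
  hadd_0 : forall x, hadd x hzero = x;
  hadd_opp : forall x, hadd x (hopp x) = hzero;
  hscal_1 : forall x, hscal C1 x = x;
  hscal_mul : forall a b x, hscal a (hscal b x) = hscal (Cmul a b) x;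
  hscal_addv : forall a x y, hscal a (hadd x y) = hadd (hscal a x) (hscal a y);
  hscal_adds : forall a b x, hscal (Cadd a b) x = hadd (hscal a x) (hscal b x);
  hinner_add_l : forall x y z, hinner (hadd x y) z = Cadd (hinner x z) (hinner y z);
  hinner_scal_l : forall a x y, hinner (hscal a x) y = Cmul a (hinner x y);
  hinner_conj : forall x y, hinner y x = Cconj (hinner x y);
  hinner_pos : forall x, 0 <= cre (hinner x x);
  hinner_def : forall x, hinner x x = C0 -> x = hzero;
  hcomplete : forall u : nat -> hcar,
    (forall eps, 0 < eps -> exists N, forall m n, (N <= m)%nat -> (N <= n)%nat ->
        sqrt (cre (hinner (hadd (u m) (hopp (u n))) (hadd (u m) (hopp (u n))))) < eps) ->
    exists l, forall eps, 0 < eps -> exists N, forall n, (N <= n)%nat ->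
        sqrt (cre (hinner (hadd (u n) (hopp l)) (hadd (u n) (hopp l)))) < eps
}.

Arguments hzero {h}. Arguments hadd {h}. Arguments hopp {h}.
Arguments hscal {h}. Arguments hinner {h}.

Section Ops.
Variable H : Hilbert.

Definition hsub (x y : H) : H := hadd x (hopp y).
Definition hnorm (x : H) : R := sqrt (cre (hinner x x)).

Fixpoint lincomb (c : nat -> Cpx) (v : nat -> H) (n : nat) : H :=
  match n with
  | O => hzero
  | S k => hadd (lincomb c v k) (hscal (c k) (v k))
  end.

Definition separable : Prop :=
  exists d : nat -> H, forall x eps, 0 < eps -> exists n, hnorm (hsub x (d n)) < eps.

Definition infinite_dimensional : Prop :=
  forall n, exists v : nat -> H, forall c : nat -> Cpx,
    lincomb c v n = hzero -> forall i, (i < n)%nat -> c i = C0.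

Definition orthonormal_basis (e : nat -> H) : Prop :=
  (forall m n, hinner (e m) (e n) = if Nat.eqb m n then C1 else C0) /\
  (forall x, (forall n, hinner x (e n) = C0) -> x = hzero).

Definition linear_op (T : H -> H) : Prop :=
  forall a x y, T (hadd (hscal a x) y) = hadd (hscal a (T x)) (T y).

Definition bounded_op (T : H -> H) : Prop :=
  exists M, forall x, hnorm (T x) <= M * hnorm x.

Definition compact_op (T : H -> H) : Prop :=
  forall x : nat -> H, (exists M, forall n, hnorm (x n) <= M) ->
    exists (phi : nat -> nat) (y : H),
      (forall n, (phi n < phi (S n))%nat) /\
      (forall eps, 0 < eps -> exists N, forall n, (N <= n)%nat ->
          hnorm (hsub (T (x (phi n))) y) < eps).

Definition adjoint_of (T Ts : H -> H) : Prop :=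
  forall x y, hinner (T x) y = hinner x (Ts y).

Definition pos_sqrt_of (A B : H -> H) : Prop :=
  linear_op A /\ (forall x y, hinner (A x) y = hinner x (A y)) /\
  (forall x, 0 <= cre (hinner (A x) x)) /\ (forall x, A (A x) = B x).

Definition orthonormal_eigvecs (A : H -> H) (r : R) (l : list H) : Prop :=
  (forall v, In v l -> A v = hscal (RtoC r) v) /\
  (forall i j, (i < length l)%nat -> (j < length l)%nat ->
     hinner (nth i l hzero) (nth j l hzero) = if Nat.eqb i j then C1 else C0).

(** s is the sequence of positive eigenvalues of A in nonincreasing order,
    repeated according to multiplicity (padded with zeros if finitely many):
    every r > 0 occurs in s exactly dim ker(A - r) times. *)
Definition eigen_seq (A : H -> H) (s : nat -> R) : Prop :=
  (forall n, 0 <= s n) /\ (forall n, s (S n) <= s n) /\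
  (forall r, 0 < r -> forall k : nat,
     (exists idx : list nat, length idx = k /\ NoDup idx /\ Forall (fun n => s n = r) idx)
     <-> (exists l : list H, length l = k /\ orthonormal_eigvecs A r l)).

End Ops.

Arguments hnorm {H}. Arguments separable : clear implicits.
Arguments infinite_dimensional : clear implicits.
Arguments orthonormal_basis {H}. Arguments linear_op {H}. Arguments bounded_op {H}.
Arguments compact_op {H}. Arguments adjoint_of {H}. Arguments pos_sqrt_of {H}.
Arguments eigen_seq {H}.

(** x^p for x >= 0, p > 0 (with 0^p = 0) *)
Definition rpow (x p : R) : R := if Rle_dec x 0 then 0 else Rpower x p.

Definition in_lp (p : R) (a : nat -> R) : Prop :=
  exists M, forall N, sum_f_R0 (fun n => rpow (Rabs (a n)) p) N <= M.

Definition singular_values {H : Hilbert} (T : H -> H) (s : nat -> R) : Prop :=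
  exists Ts A, adjoint_of T Ts /\ pos_sqrt_of A (fun x => Ts (T x)) /\ eigen_seq A s.

Definition in_Sp {H : Hilbert} (p : R) (T : H -> H) : Prop :=
  compact_op T /\ exists s, singular_values T s /\ in_lp p s.

(* Main.v *)
Require Import Defs.
From Stdlib Require Import Reals.
From Stdlib Require Import Lra Lia List Classical ClassicalEpsilon ZArith.
Import Defs.
Open Scope R_scope.

Lemma Cpx_ext a b : cre a = cre b -> cim a = cim b -> a = b.
Proof. destruct a, b; simpl; intros; subst; reflexivity. Qed.
Ltac ceq := apply Cpx_ext; simpl; ring.

Definition Copp (a : Cpx) := mkCpx (- cre a) (- cim a).
Definition Cn2 (a : Cpx) := cre a * cre a + cim a * cim a.
Lemma Cn2_ge0 a : 0 <= Cn2 a.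
Proof. unfold Cn2; nra. Qed.
Lemma Cn2_0 a : Cn2 a = 0 -> a = C0.
Proof. unfold Cn2; intros; apply Cpx_ext; simpl; nra. Qed.

Fixpoint rsum (f : nat -> R) (n : nat) : R :=
  match n with O => 0 | S k => rsum f k + f k end.
Fixpoint csum (f : nat -> Cpx) (n : nat) : Cpx :=
  match n with O => C0 | S k => Cadd (csum f k) (f k) end.

Lemma csum_re f n : cre (csum f n) = rsum (fun i => cre (f i)) n.
Proof. induction n; simpl; auto. rewrite IHn; auto. Qed.
Lemma csum_im f n : cim (csum f n) = rsum (fun i => cim (f i)) n.
Proof. induction n; simpl; auto. rewrite IHn; auto. Qed.

Lemma rsum_ext f g n : (forall i, (i < n)%nat -> f i = g i) -> rsum f n = rsum g n.
Proof. induction n; simpl; intros; auto. rewrite IHn, H; auto. Qed.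
Lemma csum_ext f g n : (forall i, (i < n)%nat -> f i = g i) -> csum f n = csum g n.
Proof. induction n; simpl; intros; auto. rewrite IHn, H; auto. Qed.
Lemma rsum_le f g n : (forall i, (i < n)%nat -> f i <= g i) -> rsum f n <= rsum g n.
Proof. induction n; simpl; intros; [lra|]. assert (rsum f n <= rsum g n) by (apply IHn; intros; apply H; lia).
  pose proof (H n ltac:(lia)). lra. Qed.
Lemma rsum_ge0 f n : (forall i, (i < n)%nat -> 0 <= f i) -> 0 <= rsum f n.
Proof. intros. replace 0 with (rsum (fun _ => 0) n). apply rsum_le; auto.
  induction n; simpl; auto. rewrite IHn; [lra|]. intros; apply H; lia. Qed.
Lemma rsum_mono f m n : (forall i, 0 <= f i) -> (m <= n)%nat -> rsum f m <= rsum f n.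
Proof. intros. induction H0; [lra|]. simpl. pose proof (H m0). lra. Qed.
Lemma rsum_plus f g n : rsum (fun i => f i + g i) n = rsum f n + rsum g n.
Proof. induction n; simpl; [lra|]. rewrite IHn; lra. Qed.
Lemma rsum_scal a f n : rsum (fun i => a * f i) n = a * rsum f n.
Proof. induction n; simpl; [lra|]. rewrite IHn; lra. Qed.
Lemma rsum_const a n : rsum (fun _ => a) n = INR n * a.
Proof. induction n; simpl rsum; [simpl; lra|]. rewrite IHn. rewrite S_INR; lra. Qed.
Lemma rsum_delta f j n : (forall i, i <> j -> f i = 0) ->
  rsum f n = if Nat.ltb j n then f j else 0.
Proof. intros. induction n; simpl; auto. rewrite IHn.
  destruct (Nat.ltb j n) eqn:E1; destruct (Nat.ltb j (S n)) eqn:E2;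
  apply Nat.ltb_lt in E1 || apply Nat.ltb_ge in E1;
  apply Nat.ltb_lt in E2 || apply Nat.ltb_ge in E2; try lia.
  - rewrite (H n); [lra|lia].
  - assert (j = n) by lia; subst; lra.
  - rewrite (H n); [lra|lia]. Qed.
Lemma rsum_split f m k : rsum f (m + k) = rsum f m + rsum (fun i => f (m + i)%nat) k.
Proof. induction k; simpl. rewrite Nat.add_0_r; lra. rewrite Nat.add_succ_r; simpl. rewrite IHk; lra. Qed.
Lemma sum_f_R0_rsum f N : sum_f_R0 f N = rsum f (S N).
Proof. induction N; simpl; auto. lra. rewrite IHN; simpl; lra. Qed.

Section HB.
Variable H : Hilbert.

Lemma ip_zero_l (z : H) : hinner hzero z = C0.
Proof. pose proof (hinner_add_l H hzero hzero z). rewrite hadd_0 in H0.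
  destruct (hinner hzero z) as [a b]. unfold Cadd in H0; simpl in H0. injection H0; intros.
  unfold C0; f_equal; lra. Qed.
Lemma ip_opp_l (x z : H) : hinner (hopp x) z = Copp (hinner x z).
Proof. pose proof (hinner_add_l H x (hopp x) z). rewrite hadd_opp, ip_zero_l in H0.
  pose proof (f_equal cre H0) as A. pose proof (f_equal cim H0) as B. simpl in A, B.
  apply Cpx_ext; simpl; lra. Qed.
Lemma ip_conj (x y : H) : hinner x y = Cconj (hinner y x).
Proof. apply hinner_conj. Qed.
Lemma ip_add_r (z x y : H) : hinner z (hadd x y) = Cadd (hinner z x) (hinner z y).
Proof. rewrite (ip_conj z), (ip_conj z x), (ip_conj z y), hinner_add_l. ceq. Qed.
Lemma ip_scal_r a (z x : H) : hinner z (hscal a x) = Cmul (Cconj a) (hinner z x).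
Proof. rewrite (ip_conj z), (ip_conj z x), hinner_scal_l. ceq. Qed.
Lemma ip_opp_r (z x : H) : hinner z (hopp x) = Copp (hinner z x).
Proof. rewrite (ip_conj z), (ip_conj z x), ip_opp_l. ceq. Qed.
Lemma ip_zero_r (z : H) : hinner z hzero = C0.
Proof. rewrite ip_conj, ip_zero_l. ceq. Qed.

Lemma ip_self_im (x : H) : cim (hinner x x) = 0.
Proof. pose proof (f_equal cim (hinner_conj H x x)). simpl in H0. lra. Qed.

Lemma hadd_0l (x : H) : hadd hzero x = x.
Proof. rewrite hadd_comm; apply hadd_0. Qed.

Lemma ip_ext (u v : H) : (forall z, hinner u z = hinner v z) -> u = v.
Proof. intros Hz. set (d := hadd u (hopp v)).
  assert (hinner d d = C0).
  { unfold d at 1. rewrite hinner_add_l, ip_opp_l, (Hz d). ceq. }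
  apply hinner_def in H0.
  transitivity (hadd d v).
  - unfold d. rewrite <- hadd_assoc. rewrite (hadd_comm H (hopp v) v), hadd_opp, hadd_0. auto.
  - rewrite H0, hadd_0l. auto. Qed.

Fixpoint vsum (v : nat -> H) (n : nat) : H :=
  match n with O => hzero | S k => hadd (vsum v k) (v k) end.

Lemma ip_vsum_l v n z : hinner (vsum v n) z = csum (fun i => hinner (v i) z) n.
Proof. induction n; simpl. apply ip_zero_l. rewrite hinner_add_l, IHn; auto. Qed.
Lemma ip_vsum_r v n z : hinner z (vsum v n) = csum (fun i => hinner z (v i)) n.
Proof. induction n; simpl. apply ip_zero_r. rewrite ip_add_r, IHn; auto. Qed.

Lemma hnorm_sq (x : H) : hnorm x * hnorm x = cre (hinner x x).
Proof. unfold hnorm. rewrite sqrt_sqrt; auto. apply hinner_pos. Qed.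
Lemma hnorm_ge0 (x : H) : 0 <= hnorm x.
Proof. apply sqrt_pos. Qed.

Lemma ip_self_C (x : H) : hinner x x = RtoC (cre (hinner x x)).
Proof. apply Cpx_ext; simpl; auto. apply ip_self_im. Qed.

Lemma re_ip_bound (x y : H) : 2 * cre (hinner x y) <= cre (hinner x x) + cre (hinner y y).
Proof. pose proof (hinner_pos H (hadd x (hopp y))).
  rewrite hinner_add_l, !ip_opp_l, !ip_add_r, !ip_opp_r in H0. simpl in H0.
  rewrite (ip_conj y x) in H0. simpl in H0. lra. Qed.

Lemma ip_sub_self (x y : H) : cre (hinner (hsub H x y) (hsub H x y)) <=
   2 * cre (hinner x x) + 2 * cre (hinner y y).
Proof. unfold hsub. rewrite hinner_add_l, !ip_opp_l, !ip_add_r, !ip_opp_r. simpl.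
  rewrite (ip_conj y x). simpl. pose proof (re_ip_bound x (hopp y)).
  rewrite ip_opp_r, ip_opp_l, ip_opp_r in H0. simpl in H0.
  pose proof (hinner_pos H x). pose proof (hinner_pos H y).
  assert (- (- cre (hinner y y)) = cre (hinner y y)) by lra. lra. Qed.

Lemma re_ip_small (u z : H) : Rabs (cre (hinner u z)) <= hnorm u * (1 + cre (hinner z z)) / 2.
Proof.
  destruct (Req_dec (hnorm u) 0) as [E|E].
  - assert (u = hzero). { apply hinner_def. unfold hnorm in E. apply sqrt_eq_0 in E; [|apply hinner_pos].
      apply Cpx_ext; simpl; auto. apply ip_self_im. }
    subst. rewrite ip_zero_l. simpl. rewrite Rabs_R0. rewrite E. lra.
  - pose proof (hnorm_ge0 u). set (t := hnorm u) in *.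
    assert (0 < t) by lra.
    pose proof (hinner_pos H (hadd u (hscal (RtoC t) (hopp z)))).
    pose proof (hinner_pos H (hadd u (hscal (RtoC t) z))).
    rewrite hinner_add_l, !ip_add_r, !hinner_scal_l, !ip_scal_r, ?ip_opp_l, ?ip_opp_r, ?hinner_scal_l, ?ip_scal_r in H2; rewrite hinner_add_l, !ip_add_r, !hinner_scal_l, !ip_scal_r in H3.
    simpl in H2, H3. rewrite (ip_conj z u) in H2, H3. simpl in H2, H3.
    rewrite ip_self_im in H2, H3.
    pose proof (hnorm_sq u). fold t in H4.
    pose proof (hinner_pos H z).
    apply Rabs_le. split.
    + apply Rmult_le_reg_l with (2 * t); [lra|]. nra.
    + apply Rmult_le_reg_l with (2 * t); [lra|]. nra.
Qed.

Lemma im_ip_small (u z : H) : Rabs (cim (hinner u z)) <= hnorm u * (1 + cre (hinner z z)) / 2.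
Proof. pose proof (re_ip_small u (hscal (mkCpx 0 1) z)).
  rewrite ip_scal_r, hinner_scal_l, ip_scal_r in H0. simpl in H0.
  replace (0 * cre (hinner u z) - - (1) * cim (hinner u z)) with (cim (hinner u z)) in H0 by ring.
  replace (0 * (0 * cre (hinner z z) - - (1) * cim (hinner z z)) -
      1 * (0 * cim (hinner z z) + - (1) * cre (hinner z z))) with (cre (hinner z z)) in H0 by ring.
  auto. Qed.

End HB.
Arguments vsum {H}.

Definition Cconv (u : nat -> Cpx) (l : Cpx) :=
  Un_cv (fun n => cre (u n)) (cre l) /\ Un_cv (fun n => cim (u n)) (cim l).

Lemma Un_cv_ext u v l : (forall n, u n = v n) -> Un_cv u l -> Un_cv v l.
Proof. intros E Hc eps He. destruct (Hc eps He) as [N HN]. exists N; intros. rewrite <- E; auto. Qed.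
Lemma Un_cv_ev u v l N0 : (forall n, (N0 <= n)%nat -> u n = v n) -> Un_cv u l -> Un_cv v l.
Proof. intros E Hc eps He. destruct (Hc eps He) as [N HN]. exists (N + N0)%nat; intros. rewrite <- E; [|lia]. apply HN; lia. Qed.
Lemma Un_cv_const a : Un_cv (fun _ => a) a.
Proof. intros eps He; exists O; intros. unfold Rdist. rewrite Rminus_diag, Rabs_R0; auto. Qed.
Lemma Un_cv_le u l B : Un_cv u l -> (forall n, u n <= B) -> l <= B.
Proof. intros Hc Hb. destruct (Rle_dec l B); auto. exfalso.
  destruct (Hc (l - B)) as [N HN]; [lra|]. specialize (HN N (le_n _)). specialize (Hb N).
  unfold Rdist in HN. apply Rabs_def2 in HN. lra. Qed.
Lemma Un_cv_ge u l B : Un_cv u l -> (forall n, B <= u n) -> B <= l.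
Proof. intros Hc Hb. destruct (Rle_dec B l); auto. exfalso.
  destruct (Hc (B - l)) as [N HN]; [lra|]. specialize (HN N (le_n _)). specialize (Hb N).
  unfold Rdist in HN. apply Rabs_def2 in HN. lra. Qed.

Lemma Cconv_unique u l1 l2 : Cconv u l1 -> Cconv u l2 -> l1 = l2.
Proof. intros [A B] [C D]. apply Cpx_ext; eapply UL_sequence; eauto. Qed.
Lemma Cconv_ext u v l : (forall n, u n = v n) -> Cconv u l -> Cconv v l.
Proof. intros E [A B]; split; eapply Un_cv_ext; eauto; intros; simpl; rewrite E; auto. Qed.
Lemma Cconv_ev u v l N : (forall n, (N <= n)%nat -> u n = v n) -> Cconv u l -> Cconv v l.
Proof. intros E [A B]; split; [eapply (Un_cv_ev _ _ _ N) | eapply (Un_cv_ev _ _ _ N)]; eauto; intros; simpl; rewrite E; auto. Qed.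
Lemma Cconv_const a : Cconv (fun _ => a) a.
Proof. split; apply Un_cv_const. Qed.
Lemma Cconv_add u v a b : Cconv u a -> Cconv v b -> Cconv (fun n => Cadd (u n) (v n)) (Cadd a b).
Proof. intros [A B] [C D]; split; simpl; apply CV_plus; auto. Qed.
Lemma Cconv_mul u v a b : Cconv u a -> Cconv v b -> Cconv (fun n => Cmul (u n) (v n)) (Cmul a b).
Proof. intros [A B] [C D]; split; simpl; [apply CV_minus|apply CV_plus]; apply CV_mult; auto. Qed.
Lemma Cconv_conj u a : Cconv u a -> Cconv (fun n => Cconj (u n)) (Cconj a).
Proof. intros [A B]; split; simpl; auto. apply CV_opp in B. eapply Un_cv_ext; [|exact B]. intros; reflexivity. Qed.
Lemma Cconv_cmul c u a : Cconv u a -> Cconv (fun n => Cmul c (u n)) (Cmul c a).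
Proof. intros; apply Cconv_mul; auto; apply Cconv_const. Qed.

Lemma csum_delta g j N : (forall i, i <> j -> g i = C0) ->
  csum g N = if Nat.ltb j N then g j else C0.
Proof. intros Hg. apply Cpx_ext; rewrite ?csum_re, ?csum_im.
  - rewrite (rsum_delta _ j). destruct (Nat.ltb j N); auto. intros i Hi; rewrite (Hg i Hi); auto.
  - rewrite (rsum_delta _ j). destruct (Nat.ltb j N); auto. intros i Hi; rewrite (Hg i Hi); auto. Qed.

Lemma rsum_trunc g m n : rsum (fun k => if Nat.ltb k n then g k else 0) m = rsum g (Nat.min m n).
Proof. induction m; [simpl; auto|]. simpl rsum at 1. rewrite IHm. destruct (Nat.ltb m n) eqn:E.
  - apply Nat.ltb_lt in E. replace (Nat.min (S m) n) with (S m) by lia.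
    replace (Nat.min m n) with m by lia. simpl; auto.
  - apply Nat.ltb_ge in E. replace (Nat.min (S m) n) with n by lia. replace (Nat.min m n) with n by lia. lra. Qed.

Definition hconv {H : Hilbert} (u : nat -> H) (l : H) :=
  forall eps, 0 < eps -> exists N, forall n, (N <= n)%nat -> hnorm (hsub H (u n) l) < eps.

Lemma hconv_weak {H : Hilbert} (u : nat -> H) l z : hconv u l -> Cconv (fun n => hinner (u n) z) (hinner l z).
Proof. intros Hc.
  set (K := (1 + cre (hinner z z)) / 2 + 1).
  assert (0 < K) by (unfold K; pose proof (hinner_pos H z); lra).
  assert (Hd : forall n, hinner (u n) z = Cadd (hinner (hsub H (u n) l) z) (hinner l z)).
  { intros; unfold hsub. rewrite hinner_add_l, ip_opp_l. ceq. }
  split; intros eps He; destruct (Hc (eps / K)) as [N HN]; try (apply Rdiv_lt_0_compat; auto);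
  exists N; intros n Hn; specialize (HN n Hn); unfold Rdist; rewrite Hd; simpl.
  - replace (cre (hinner (hsub H (u n) l) z) + cre (hinner l z) - cre (hinner l z)) with (cre (hinner (hsub H (u n) l) z)) by ring.
    eapply Rle_lt_trans. apply re_ip_small. pose proof (hnorm_ge0 _ (hsub H (u n) l)).
    apply Rmult_lt_compat_r with (r := K) in HN; auto. unfold Rdiv in HN. rewrite Rmult_assoc, Rinv_l in HN; [|lra].
    unfold K in HN. pose proof (hinner_pos H z). nra.
  - replace (cim (hinner (hsub H (u n) l) z) + cim (hinner l z) - cim (hinner l z)) with (cim (hinner (hsub H (u n) l) z)) by ring.
    eapply Rle_lt_trans. apply im_ip_small. pose proof (hnorm_ge0 _ (hsub H (u n) l)).
    apply Rmult_lt_compat_r with (r := K) in HN; auto. unfold Rdiv in HN. rewrite Rmult_assoc, Rinv_l in HN; [|lra].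
    unfold K in HN. pose proof (hinner_pos H z). nra.
Qed.

Section ON.
Variable H : Hilbert.
Variable f : nat -> H.
Hypothesis Hf : forall i j, hinner (f i) (f j) = if Nat.eqb i j then C1 else C0.

Definition V (b : nat -> Cpx) (N : nat) : H := vsum (fun k => hscal (b k) (f k)) N.
Definition P (b : nat -> Cpx) (N : nat) : R := rsum (fun k => Cn2 (b k)) N.

Lemma P_mono b m n : (m <= n)%nat -> P b m <= P b n.
Proof. intros; apply rsum_mono; auto. intros; apply Cn2_ge0. Qed.
Lemma P_ge0 b n : 0 <= P b n.
Proof. apply rsum_ge0; intros; apply Cn2_ge0. Qed.

Lemma V_f b N j : hinner (V b N) (f j) = if Nat.ltb j N then b j else C0.
Proof. unfold V. rewrite ip_vsum_l. rewrite (csum_delta _ j).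
  - destruct (Nat.ltb j N); auto. rewrite hinner_scal_l, Hf, Nat.eqb_refl. ceq.
  - intros. rewrite hinner_scal_l, Hf. apply Nat.eqb_neq in H0. rewrite H0. ceq. Qed.

Lemma V_z b N z : hinner (V b N) z = csum (fun k => Cmul (b k) (hinner (f k) z)) N.
Proof. unfold V. rewrite ip_vsum_l. apply csum_ext; intros. rewrite hinner_scal_l; auto. Qed.

Lemma re_VV b m n : cre (hinner (V b m) (V b n)) = P b (Nat.min m n).
Proof. rewrite V_z, csum_re. unfold P. rewrite <- rsum_trunc. apply rsum_ext; intros.
  rewrite ip_conj, V_f. destruct (Nat.ltb i n); simpl; unfold Cn2; ring. Qed.

Lemma norm_Vdiff b m n : cre (hinner (hsub H (V b m) (V b n)) (hsub H (V b m) (V b n))) = Rabs (P b m - P b n).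
Proof. unfold hsub. rewrite hinner_add_l, !ip_opp_l, !ip_add_r, !ip_opp_r. simpl.
  rewrite !re_VV. rewrite !Nat.min_id.
  destruct (Nat.le_ge_cases m n).
  - rewrite (Nat.min_l m n), (Nat.min_r n m) by lia. pose proof (P_mono b m n H0).
    rewrite Rabs_left1; lra.
  - rewrite (Nat.min_r m n), (Nat.min_l n m) by lia. pose proof (P_mono b n m H0).
    rewrite Rabs_right; lra. Qed.

Lemma bessel x N : P (fun k => hinner x (f k)) N <= cre (hinner x x).
Proof. set (b := fun k => hinner x (f k)). set (T := V b N).
  pose proof (hinner_pos H (hadd x (hopp T))).
  rewrite hinner_add_l, !ip_opp_l, !ip_add_r, !ip_opp_r in H0. simpl in H0.
  assert (E : cre (hinner x T) = P b N).
  { unfold T, V. rewrite ip_vsum_r, csum_re. apply rsum_ext; intros. rewrite ip_scal_r. unfold b. simpl. unfold Cn2; ring. }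
  assert (E2 : cre (hinner T x) = P b N).
  { rewrite ip_conj. simpl. auto. }
  assert (E3 : cre (hinner T T) = P b N). { unfold T. rewrite re_VV, Nat.min_id; auto. }
  lra. Qed.

Lemma V_conv b : (forall eps, 0 < eps -> exists N, forall m n, (N <= n)%nat -> (n <= m)%nat -> P b m - P b n < eps) ->
  exists l, hconv (V b) l.
Proof. intros Hc. apply (hcomplete H (V b)). intros eps He.
  destruct (Hc (eps * eps)) as [N HN]; [nra|]. exists N. intros m n Hm Hn.
  fold (hsub H (V b m) (V b n)). rewrite norm_Vdiff.
  rewrite <- (sqrt_square eps) by lra. apply sqrt_lt_1_alt. split; [apply Rabs_pos|].
  destruct (Nat.le_ge_cases m n).
  - rewrite Rabs_left1. pose proof (HN n m Hm H0). lra. pose proof (P_mono b m n H0); lra.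
  - rewrite Rabs_right. pose proof (HN m n Hn H0). lra. pose proof (P_mono b n m H0); lra. Qed.

End ON.

Lemma csum_add f g n : csum (fun k => Cadd (f k) (g k)) n = Cadd (csum f n) (csum g n).
Proof. induction n; simpl. ceq. rewrite IHn. ceq. Qed.
Lemma csum_cmul a f n : csum (fun k => Cmul a (f k)) n = Cmul a (csum f n).
Proof. induction n; simpl. ceq. rewrite IHn. ceq. Qed.
Lemma csum_conj f n : csum (fun k => Cconj (f k)) n = Cconj (csum f n).
Proof. induction n; simpl. ceq. rewrite IHn. ceq. Qed.

Lemma hscal_zero (H : Hilbert) a : hscal a (@hzero H) = hzero.
Proof. apply ip_ext. intros. rewrite hinner_scal_l, !ip_zero_l. ceq. Qed.

Section OP.
Variable H : Hilbert.
Variable f : nat -> H.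
Hypothesis Hf : forall i j, hinner (f i) (f j) = if Nat.eqb i j then C1 else C0.
Variable c : nat -> R.
Hypothesis c_pos : forall k, 0 < c k.
Hypothesis c_dec : forall k, c (S k) < c k.
Hypothesis c_lim : Un_cv c 0.

Lemma c_le m n : (m <= n)%nat -> c n <= c m.
Proof. induction 1; [lra|]. pose proof (c_dec m0); lra. Qed.
Lemma c_lt m n : (m < n)%nat -> c n < c m.
Proof. intros. pose proof (c_le (S m) n H0). pose proof (c_dec m). lra. Qed.
Lemma c_inj m n : c m = c n -> m = n.
Proof. intros. destruct (Nat.lt_total m n) as [h|[h|h]]; auto;
  pose proof (c_lt _ _ h); lra. Qed.

Definition bc (x : H) k := Cmul (RtoC (c k)) (hinner x (f k)).
Definition ax (x : H) k := hinner x (f k).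

Lemma Cn2_bc x k : Cn2 (bc x k) = c k * c k * Cn2 (ax x k).
Proof. unfold bc, ax, Cn2; simpl; ring. Qed.

Lemma P_bc_diff x n d : P (bc x) (n + d) - P (bc x) n <= c n * c n * cre (hinner x x).
Proof. unfold P. rewrite rsum_split.
  assert (rsum (fun i => Cn2 (bc x (n + i)%nat)) d <= rsum (fun i => c n * c n * Cn2 (ax x (n + i)%nat)) d).
  { apply rsum_le; intros. rewrite Cn2_bc. pose proof (c_le n (n+i) ltac:(lia)). pose proof (c_pos (n+i)).
    pose proof (Cn2_ge0 (ax x (n+i))). apply Rmult_le_compat_r; auto. nra. }
  rewrite rsum_scal in H0.
  pose proof (bessel H f Hf x (n + d)). unfold P in H1. rewrite rsum_split in H1.
  assert (0 <= rsum (fun k => Cn2 (hinner x (f k))) n) by (apply rsum_ge0; intros; apply Cn2_ge0).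
  pose proof (c_pos n). unfold ax in H0.
  assert (rsum (fun i => Cn2 (hinner x (f (n + i)%nat))) d <= cre (hinner x x)) by lra.
  nra. Qed.

Lemma S_exists x : exists l, hconv (V H f (bc x)) l.
Proof. apply V_conv; auto. intros eps He.
  set (K := (cre (hinner x x) + 1) * c 0%nat).
  assert (0 < K) by (unfold K; pose proof (hinner_pos H x); pose proof (c_pos 0); nra).
  destruct (c_lim (eps / K)) as [N HN]. apply Rdiv_lt_0_compat; auto.
  exists N. intros m n Hn Hnm. replace m with (n + (m - n))%nat by lia.
  eapply Rle_lt_trans. apply P_bc_diff.
  specialize (HN n Hn). unfold Rdist in HN. rewrite Rminus_0_r, Rabs_right in HN by (left; apply c_pos).
  pose proof (c_le 0 n ltac:(lia)). pose proof (c_pos n). pose proof (hinner_pos H x).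
  apply Rmult_lt_compat_r with (r := K) in HN; auto. unfold Rdiv in HN. rewrite Rmult_assoc, Rinv_l in HN; [|lra].
  unfold K in HN. nra. Qed.

Definition Sop (x : H) : H := proj1_sig (constructive_indefinite_description _ (S_exists x)).
Lemma Sop_spec x : hconv (V H f (bc x)) (Sop x).
Proof. unfold Sop. destruct (constructive_indefinite_description _ _); auto. Qed.

Lemma Sop_weak x z : Cconv (fun N => csum (fun k => Cmul (bc x k) (hinner (f k) z)) N) (hinner (Sop x) z).
Proof. eapply Cconv_ext; [|apply hconv_weak, Sop_spec]. intros. simpl. apply V_z. Qed.

Lemma Sop_f x j : hinner (Sop x) (f j) = bc x j.
Proof. eapply Cconv_unique; [apply Sop_weak|]. apply (Cconv_ev (fun _ => bc x j) _ _ (S j)); [|apply Cconv_const].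
  intros. rewrite (csum_delta _ j).
  - replace (Nat.ltb j n) with true by (symmetry; apply Nat.ltb_lt; lia). rewrite Hf, Nat.eqb_refl. ceq.
  - intros. rewrite Hf. apply Nat.eqb_neq in H1. rewrite H1. ceq. Qed.

Lemma Sop_sa x z : hinner (Sop x) z = hinner x (Sop z).
Proof. rewrite (ip_conj _ x). eapply Cconv_unique; [apply Sop_weak|].
  eapply Cconv_ext; [|apply Cconv_conj, Sop_weak]. intros. simpl. rewrite <- csum_conj.
  apply csum_ext; intros. unfold bc. rewrite (ip_conj _ z (f i)), (ip_conj _ (f i) x). ceq. Qed.

Lemma Sop_lin : linear_op Sop.
Proof. intros a x y. apply ip_ext. intros z.
  rewrite hinner_add_l, hinner_scal_l.
  eapply Cconv_unique; [apply Sop_weak|].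
  eapply Cconv_ext; [|apply Cconv_add; [apply Cconv_cmul; apply Sop_weak | apply Sop_weak]].
  intros. simpl. rewrite <- csum_cmul, <- csum_add. apply csum_ext; intros.
  unfold bc. rewrite hinner_add_l, hinner_scal_l. ceq. Qed.

Lemma Sop_norm x : Un_cv (fun N => rsum (fun k => c k * c k * Cn2 (ax x k)) N) (cre (hinner (Sop x) (Sop x))).
Proof. destruct (Sop_weak x (Sop x)) as [A _]. eapply Un_cv_ext; [|exact A].
  intros. simpl. rewrite csum_re. apply rsum_ext; intros. rewrite ip_conj, Sop_f.
  unfold bc, ax, Cn2; simpl; ring. Qed.

Lemma Sop_pos x : 0 <= cre (hinner (Sop x) x).
Proof. destruct (Sop_weak x x) as [A _]. eapply Un_cv_ge; [exact A|]. intros. cbv beta. rewrite csum_re.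
  apply rsum_ge0; intros. rewrite (ip_conj _ (f i) x). unfold bc; simpl.
  pose proof (c_pos i). pose proof (Cn2_ge0 (hinner x (f i))). unfold Cn2 in H1.
  replace (c i * cre (hinner x (f i)) - 0 * cim (hinner x (f i))) with (c i * cre (hinner x (f i))) by ring.
  replace (c i * cim (hinner x (f i)) + 0 * cre (hinner x (f i))) with (c i * cim (hinner x (f i))) by ring.
  nra. Qed.

Lemma Sop_eig j : Sop (f j) = hscal (RtoC (c j)) (f j).
Proof. apply ip_ext; intros z. rewrite hinner_scal_l. eapply Cconv_unique; [apply Sop_weak|].
  apply (Cconv_ev (fun _ => Cmul (RtoC (c j)) (hinner (f j) z)) _ _ (S j)); [|apply Cconv_const].
  intros. rewrite (csum_delta _ j).
  - replace (Nat.ltb j n) with true by (symmetry; apply Nat.ltb_lt; lia). unfold bc. rewrite Hf, Nat.eqb_refl. ceq.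
  - intros. unfold bc. rewrite Hf. apply Nat.eqb_neq in H1. rewrite (Nat.eqb_sym j i), H1. ceq. Qed.

Lemma Sop_tail x K : cre (hinner (Sop x) (Sop x)) <= c 0%nat * c 0%nat * P (ax x) K + c K * c K * cre (hinner x x).
Proof. eapply Un_cv_le; [apply Sop_norm|]. intros N.
  pose proof (c_pos 0). pose proof (c_pos K).
  assert (HA : forall M, rsum (fun k => c k * c k * Cn2 (ax x k)) M <= c 0%nat * c 0%nat * P (ax x) M).
  { intros. unfold P. rewrite <- rsum_scal. apply rsum_le; intros. pose proof (c_le 0 i ltac:(lia)).
    pose proof (c_pos i). pose proof (Cn2_ge0 (ax x i)). apply Rmult_le_compat_r; auto. nra. }
  pose proof (hinner_pos H x).
  destruct (Nat.le_gt_cases N K).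
  - pose proof (HA N). pose proof (P_mono (ax x) N K H3). nra.
  - replace N with (K + (N - K))%nat by lia. rewrite rsum_split. pose proof (HA K).
    assert (rsum (fun i => c (K + i)%nat * c (K + i)%nat * Cn2 (ax x (K + i))) (N - K) <= rsum (fun i => c K * c K * Cn2 (ax x (K + i))) (N - K)).
    { apply rsum_le; intros. pose proof (c_le K (K+i) ltac:(lia)). pose proof (c_pos (K+i)).
      pose proof (Cn2_ge0 (ax x (K+i))). apply Rmult_le_compat_r; auto. nra. }
    match goal with h : rsum _ _ <= rsum _ _ |- _ => rewrite rsum_scal in h end.
    pose proof (bessel H f Hf x (K + (N - K))) as HB. unfold P in HB. rewrite rsum_split in HB.
    assert (0 <= rsum (fun k => Cn2 (hinner x (f k))) K) by (apply rsum_ge0; intros; apply Cn2_ge0).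
    unfold ax in *. nra. Qed.

Lemma Sop_bound x : cre (hinner (Sop x) (Sop x)) <= c 0%nat * c 0%nat * cre (hinner x x).
Proof. pose proof (Sop_tail x 0). unfold P in H0. simpl in H0. lra. Qed.

Lemma Sop_bounded : bounded_op Sop.
Proof. exists (c 0%nat). intros x. unfold hnorm. rewrite <- (sqrt_square (c 0%nat)) by (left; apply c_pos).
  rewrite <- sqrt_mult; [| pose proof (c_pos 0); nra | apply hinner_pos].
  apply sqrt_le_1_alt. apply Sop_bound. Qed.

Lemma eig_coef v r k : Sop v = hscal (RtoC r) v -> r <> c k -> hinner v (f k) = C0.
Proof. intros E Hr. pose proof (Sop_f v k). rewrite E, hinner_scal_l in H0. unfold bc in H0.
  pose proof (f_equal cre H0). pose proof (f_equal cim H0). simpl in H1, H2.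
  apply Cpx_ext; simpl.
  - apply Rmult_eq_reg_l with (r - c k); [|lra]. lra.
  - apply Rmult_eq_reg_l with (r - c k); [|lra]. lra. Qed.

Lemma scal_inv (v : H) r : r <> 0 -> v = hscal (RtoC (/ r)) (hscal (RtoC r) v).
Proof. intros. rewrite hscal_mul. replace (Cmul (RtoC (/ r)) (RtoC r)) with C1. rewrite hscal_1; auto.
  apply Cpx_ext; simpl; field; auto. Qed.

Lemma eig_none v r : 0 < r -> Sop v = hscal (RtoC r) v -> (forall k, r <> c k) -> v = hzero.
Proof. intros Hr E Hk.
  assert (cre (hinner (Sop v) (Sop v)) = 0).
  { eapply UL_sequence; [apply Sop_norm|]. eapply Un_cv_ext; [|apply Un_cv_const].
    intros. cbv beta. transitivity (rsum (fun _ => 0) n). rewrite rsum_const; ring.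
    apply rsum_ext; intros. unfold ax. rewrite (eig_coef v r i E (Hk i)).
    unfold Cn2; simpl; ring. }
  assert (Sop v = hzero). { apply hinner_def. rewrite ip_self_C, H0. ceq. }
  rewrite (scal_inv v r) by lra. rewrite <- E, H1. apply hscal_zero. Qed.

Lemma eig_one v j : Sop v = hscal (RtoC (c j)) v -> v = hscal (hinner v (f j)) (f j).
Proof. intros E. rewrite (scal_inv v (c j)) by (pose proof (c_pos j); lra). rewrite <- E.
  apply ip_ext; intros z. rewrite !hinner_scal_l.
  assert (hinner (Sop v) z = Cmul (RtoC (c j)) (Cmul (hinner v (f j)) (hinner (f j) z))).
  { eapply Cconv_unique; [apply Sop_weak|].
    apply (Cconv_ev (fun _ => Cmul (RtoC (c j)) (Cmul (hinner v (f j)) (hinner (f j) z))) _ _ (S j)); [|apply Cconv_const].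
    intros. rewrite (csum_delta _ j).
    - replace (Nat.ltb j n) with true by (symmetry; apply Nat.ltb_lt; lia). unfold bc. ceq.
    - intros. unfold bc. rewrite (eig_coef v (c j) i E). ceq. intro h; apply H1. symmetry; apply c_inj; auto. }
  rewrite H0. rewrite E, hinner_scal_l. pose proof (c_pos j). apply Cpx_ext; simpl; field; lra. Qed.

End OP.

Lemma Rabs_le_inv' a b : Rabs a <= b -> -b <= a <= b.
Proof. intros h. destruct (Rcase_abs a); [rewrite Rabs_left in h|rewrite Rabs_right in h]; lra. Qed.

Definition sincr (s : nat -> nat) := forall n, (s n < s (S n))%nat.
Lemma sincr_ge s : sincr s -> forall n, (n <= s n)%nat.
Proof. intros Hs n; induction n; [lia|]. pose proof (Hs n); lia. Qed.
Lemma sincr_lt s : sincr s -> forall m n, (m < n)%nat -> (s m < s n)%nat.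
Proof. intros Hs m n H; induction H. apply Hs. pose proof (Hs m0); lia. Qed.

Definition Rcauchy (u : nat -> R) := forall eps, 0 < eps -> exists N, forall m n, (N <= m)%nat -> (N <= n)%nat -> Rabs (u m - u n) < eps.

Lemma cv_cauchy u l : Un_cv u l -> Rcauchy u.
Proof. intros Hc eps He. destruct (Hc (eps/2)) as [N HN]; [lra|]. exists N; intros.
  pose proof (HN m H). pose proof (HN n H0). unfold Rdist in *.
  replace (u m - u n) with ((u m - l) - (u n - l)) by ring.
  eapply Rle_lt_trans. apply Rabs_triang. rewrite Rabs_Ropp. lra. Qed.

Lemma Rcauchy_sub u s : sincr s -> Rcauchy u -> Rcauchy (fun n => u (s n)).
Proof. intros Hs Hc eps He. destruct (Hc eps He) as [N HN]. exists N; intros.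
  apply HN; pose proof (sincr_ge s Hs m); pose proof (sincr_ge s Hs n); lia. Qed.

Lemma bw u B : (forall n, Rabs (u n) <= B) -> exists s, sincr s /\ Rcauchy (fun n => u (s n)).
Proof. intros Hb.
  destruct (Bolzano_Weierstrass u (fun x => -B <= x <= B) (compact_P3 (-B) B)) as [l Hl].
  { intros n. apply Rabs_le_inv'; auto. }
  assert (Hg : forall N n, exists p, (N <= p)%nat /\ Rabs (u p - l) < / (INR n + 1)).
  { intros N n. assert (0 < / (INR n + 1)) by (apply Rinv_0_lt_compat; pose proof (pos_INR n); lra).
    destruct (Hl (fun y => Rabs (y - l) < / (INR n + 1)) N) as [p [Hp1 Hp2]].
    - exists (mkposreal _ H). intros y Hy. unfold disc in Hy. simpl in Hy. auto.
    - exists p; split; auto. }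
  set (g := fun N n => proj1_sig (constructive_indefinite_description _ (Hg N n))).
  assert (Hgs : forall N n, (N <= g N n)%nat /\ Rabs (u (g N n) - l) < / (INR n + 1)).
  { intros. unfold g. destruct (constructive_indefinite_description _ _); auto. }
  set (s := fix s n := match n with O => g O O | S k => g (S (s k)) (S k) end).
  exists s. split.
  - intros n. simpl. destruct (Hgs (S (s n)) (S n)); lia.
  - apply (cv_cauchy _ l). intros eps He.
    destruct (archimed (/ eps)) as [A _].
    assert (0 <= IZR (up (/ eps))). { pose proof (Rinv_0_lt_compat eps He). lra. }
    exists (Z.to_nat (up (/ eps))). intros n Hn. unfold Rdist.
    assert (Hs : Rabs (u (s n) - l) < / (INR n + 1)).
    { destruct n; simpl; [apply Hgs|]. apply Hgs. }
    eapply Rlt_le_trans; [exact Hs|].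
    apply le_INR in Hn. rewrite INR_IZR_INZ, Z2Nat.id in Hn by (apply le_IZR; lra).
    rewrite <- (Rinv_inv eps). apply Rinv_le_contravar. apply Rinv_0_lt_compat; auto. lra. Qed.

Definition Ccauchy (w : nat -> Cpx) := Rcauchy (fun n => cre (w n)) /\ Rcauchy (fun n => cim (w n)).

Lemma bwC w B : (forall n, Rabs (cre (w n)) <= B /\ Rabs (cim (w n)) <= B) ->
  exists s, sincr s /\ Ccauchy (fun n => w (s n)).
Proof. intros Hb. destruct (bw (fun n => cre (w n)) B) as [s1 [H1 H2]]. intros; apply Hb.
  destruct (bw (fun n => cim (w (s1 n))) B) as [s2 [H3 H4]]. intros; apply Hb.
  exists (fun n => s1 (s2 n)). split.
  - intros n. apply sincr_lt; auto.
  - split; auto. apply (Rcauchy_sub (fun n => cre (w (s1 n)))); auto. Qed.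

Section CPT.
Variable H : Hilbert.
Variable f : nat -> H.
Hypothesis Hf : forall i j, hinner (f i) (f j) = if Nat.eqb i j then C1 else C0.
Variable c : nat -> R.
Hypothesis c_pos : forall k, 0 < c k.
Hypothesis c_dec : forall k, c (S k) < c k.
Hypothesis c_lim : Un_cv c 0.
Local Notation S := (Sop H f Hf c c_pos c_dec c_lim).

Lemma Sop_sub x y : S (hsub H x y) = hsub H (S x) (S y).
Proof. apply ip_ext; intros z. unfold hsub. rewrite hinner_add_l, ip_opp_l.
  replace (Cadd (hinner (S x) z) (Copp (hinner (S y) z))) with (Cadd (hinner (S x) z) (Cmul (mkCpx (-1) 0) (hinner (S y) z))) by ceq.
  eapply Cconv_unique; [apply Sop_weak|].
  eapply Cconv_ext; [|apply Cconv_add; [apply Sop_weak | apply Cconv_cmul; apply Sop_weak]].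
  intros. simpl. rewrite <- csum_cmul, <- csum_add. apply csum_ext; intros.
  unfold bc. rewrite hinner_add_l, ip_opp_l. ceq. Qed.


Section SEQ.
Variable x : nat -> H.
Variable M : R.
Hypothesis HM : forall n, hnorm (x n) <= M.

Definition aa k n := hinner (x n) (f k).

Lemma M_ge0 : 0 <= M.
Proof. pose proof (HM O). pose proof (hnorm_ge0 _ (x O)). lra. Qed.

Lemma xx_le n : cre (hinner (x n) (x n)) <= M * M.
Proof. rewrite <- hnorm_sq. pose proof (HM n). pose proof (hnorm_ge0 _ (x n)). nra. Qed.

Lemma aa_bound k n : Rabs (cre (aa k n)) <= M /\ Rabs (cim (aa k n)) <= M.
Proof. pose proof (bessel H f Hf (x n) (Datatypes.S k)). unfold P in H0. simpl in H0.
  pose proof (rsum_ge0 (fun k0 => Cn2 (hinner (x n) (f k0))) k (fun i _ => Cn2_ge0 _)).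
  pose proof (xx_le n). pose proof M_ge0. assert (A0 : Cn2 (aa k n) <= M * M) by (unfold aa; lra).
  unfold Cn2 in A0.
  assert (A1 : cre (aa k n) * cre (aa k n) <= M * M) by (pose proof (Rle_0_sqr (cim (aa k n))); unfold Rsqr in *; lra).
  assert (A2 : cim (aa k n) * cim (aa k n) <= M * M) by (pose proof (Rle_0_sqr (cre (aa k n))); unfold Rsqr in *; lra).
  split; apply Rabs_le; split; nra. Qed.

Lemma ext_ex (psi : nat -> nat) k : exists s, sincr s /\ Ccauchy (fun n => aa k (psi (s n))).
Proof. apply (bwC (fun n => aa k (psi n)) M). intros; apply aa_bound. Qed.

Definition ext psi k := proj1_sig (constructive_indefinite_description _ (ext_ex psi k)).
Lemma ext_spec psi k : sincr (ext psi k) /\ Ccauchy (fun n => aa k (psi (ext psi k n))).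
Proof. unfold ext. destruct (constructive_indefinite_description _ _); auto. Qed.

Fixpoint psi (K : nat) : nat -> nat :=
  match K with O => fun n => n | Datatypes.S K' => fun n => psi K' (ext (psi K') K' n) end.

Lemma psi_sincr K : sincr (psi K).
Proof. induction K; intros n; simpl; [lia|]. apply sincr_lt; auto. apply ext_spec. Qed.

Lemma psi_sub K d : exists t, (forall n, (n <= t n)%nat) /\ forall n, psi (K + d) n = psi K (t n).
Proof. induction d.
  - exists (fun n => n). split; intros; [auto|]. rewrite Nat.add_0_r; auto.
  - destruct IHd as [t [T1 T2]]. exists (fun n => t (ext (psi (K + d)) (K + d) n)). split.
    + intros n. pose proof (sincr_ge _ (proj1 (ext_spec (psi (K+d)) (K+d))) n). pose proof (T1 (ext (psi (K + d)) (K + d) n)). lia.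
    + intros n. rewrite Nat.add_succ_r. simpl. apply T2. Qed.

Definition phi n := psi (Datatypes.S n) n.

Lemma phi_sincr : sincr phi.
Proof. intros n. unfold phi.
  change (psi (Datatypes.S n) n < psi (Datatypes.S n) (ext (psi (Datatypes.S n)) (Datatypes.S n) (Datatypes.S n)))%nat.
  pose proof (sincr_ge _ (proj1 (ext_spec (psi (Datatypes.S n)) (Datatypes.S n))) (Datatypes.S n)).
  apply sincr_lt; [apply psi_sincr|]. lia. Qed.

Lemma phi_cauchy k : Ccauchy (fun n => aa k (phi n)).
Proof. destruct (ext_spec (psi k) k) as [_ [C1' C2']].
  assert (Hrep : forall n, (Datatypes.S k <= n)%nat -> exists t, (n <= t)%nat /\ phi n = psi (Datatypes.S k) t).
  { intros n Hn. destruct (psi_sub (Datatypes.S k) (n - k)) as [t [T1 T2]].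
    exists (t n). split; auto. unfold phi. rewrite <- T2. f_equal. lia. }
  split; intros eps He; [destruct (C1' eps He) as [N HN] | destruct (C2' eps He) as [N HN]];
  exists (N + Datatypes.S k)%nat; intros m n Hm Hn;
  destruct (Hrep m ltac:(lia)) as [tm [Tm1 Tm2]]; destruct (Hrep n ltac:(lia)) as [tn [Tn1 Tn2]];
  rewrite Tm2, Tn2; simpl in HN; apply HN; lia. Qed.

Lemma phi_unif K d : 0 < d -> exists N, forall m n, (N <= m)%nat -> (N <= n)%nat ->
  forall k, (k < K)%nat -> Cn2 (Cadd (aa k (phi m)) (Copp (aa k (phi n)))) < d.
Proof. intros Hd. induction K.
  - exists O. intros; lia.
  - destruct IHK as [N1 HN1].
    set (e := sqrt (d / 2)).
    assert (He : 0 < e) by (apply sqrt_lt_R0; lra).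
    assert (Hee : e * e = d / 2) by (apply sqrt_sqrt; lra).
    destruct (phi_cauchy K) as [A B]. destruct (A e He) as [N2 HN2]. destruct (B e He) as [N3 HN3].
    exists (N1 + N2 + N3)%nat. intros m n Hm Hn k Hk.
    destruct (Nat.eq_dec k K).
    + subst. pose proof (HN2 m n ltac:(lia) ltac:(lia)). pose proof (HN3 m n ltac:(lia) ltac:(lia)).
      unfold Cn2; simpl.
      apply Rabs_def2 in H0. apply Rabs_def2 in H1. destruct H0, H1.
      assert ((cre (aa K (phi m)) + - cre (aa K (phi n))) * (cre (aa K (phi m)) + - cre (aa K (phi n))) < e * e) by nra.
      assert ((cim (aa K (phi m)) + - cim (aa K (phi n))) * (cim (aa K (phi m)) + - cim (aa K (phi n))) < e * e) by nra.
      lra.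
    + apply HN1; lia. Qed.

Lemma Sx_cauchy : forall eps, 0 < eps -> exists N, forall m n, (N <= m)%nat -> (N <= n)%nat ->
  hnorm (hsub H (S (x (phi m))) (S (x (phi n)))) < eps.
Proof. intros eps He.
  pose proof M_ge0. pose proof (c_pos O).
  set (B := 4 * M * M + 1).
  destruct (c_lim (eps * eps / (4 * B * c O))) as [K HK].
  { apply Rdiv_lt_0_compat; [nra|]. unfold B; nra. }
  assert (HcK : c K * c K * (4 * M * M) < eps * eps / 2).
  { specialize (HK K (le_n _)). unfold Rdist in HK. rewrite Rminus_0_r, Rabs_right in HK by (left; apply c_pos).
    pose proof (c_pos K). pose proof (c_le c c_dec 0 K ltac:(lia)).
    assert (c K * (4 * B * c O) < eps * eps).
    { assert (0 < 4 * B * c O) by (unfold B; nra). apply (Rmult_lt_compat_r (4 * B * c O)) in HK; auto.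
      replace (eps * eps / (4 * B * c O) * (4 * B * c O)) with (eps * eps) in HK by (unfold Rdiv; rewrite Rmult_assoc, Rinv_l by lra; ring). lra. }
    assert (c K * c K * (4 * M * M) <= c K * c O * (4 * M * M)) by (apply Rmult_le_compat_r; nra).
    assert (c K * c O * (4 * M * M) <= c K * c O * B) by (unfold B; apply Rmult_le_compat_l; nra).
    nra. }
  set (d := eps * eps / (2 * (c O * c O * (INR K + 1)))).
  assert (Hd : 0 < d). { unfold d. apply Rdiv_lt_0_compat; [nra|]. pose proof (pos_INR K). nra. }
  destruct (phi_unif K d Hd) as [N HN]. exists N. intros m n Hm Hn.
  rewrite <- Sop_sub. set (u := hsub H (x (phi m)) (x (phi n))).
  assert (Hu : cre (hinner u u) <= 4 * M * M).
  { unfold u. pose proof (ip_sub_self H (x (phi m)) (x (phi n))). pose proof (xx_le (phi m)). pose proof (xx_le (phi n)). lra. }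
  assert (HP : P (ax H f u) K <= INR K * d).
  { unfold P. rewrite <- rsum_const. apply rsum_le; intros. left.
    unfold ax, u, hsub. rewrite hinner_add_l, ip_opp_l. apply HN; auto. }
  pose proof (Sop_tail H f Hf c c_pos c_dec c_lim u K).
  assert (c O * c O * P (ax H f u) K < eps * eps / 2 + 0).
  { assert (c O * c O * P (ax H f u) K <= c O * c O * (INR K * d)) by (apply Rmult_le_compat_l; nra).
    assert (c O * c O * (INR K * d) < eps * eps / 2).
    { pose proof (pos_INR K).
      replace (c O * c O * (INR K * d)) with (eps * eps / 2 * (INR K / (INR K + 1))) by (unfold d; field; lra).
      assert (INR K / (INR K + 1) < 1). { apply (Rmult_lt_reg_r (INR K + 1)); [lra|]. unfold Rdiv. rewrite Rmult_assoc, Rinv_l; lra. }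
      assert (0 < eps * eps / 2) by nra. nra. }
    lra. }
  assert (cre (hinner (S u) (S u)) < eps * eps).
  { pose proof (c_pos K). assert (c K * c K * cre (hinner u u) <= c K * c K * (4 * M * M)) by (apply Rmult_le_compat_l; nra). lra. }
  unfold hnorm. rewrite <- (sqrt_square eps) by lra. apply sqrt_lt_1_alt. split; auto. apply hinner_pos. Qed.

End SEQ.

Lemma Sop_compact : compact_op S.
Proof. intros x [M HM]. exists (phi x M HM).
  destruct (hcomplete H (fun n => S (x (phi x M HM n)))) as [y Hy].
  { intros eps He. destruct (Sx_cauchy x M HM eps He) as [N HN]. exists N. intros. apply HN; auto. }
  exists y. split. apply phi_sincr. intros eps He. destruct (Hy eps He) as [N HN]. exists N. intros. apply HN; auto. Qed.

End CPT.

Lemma ln_le_x y : 0 < y -> ln y <= y - 1.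
Proof. intros. pose proof (exp_ineq1_le (ln y)). rewrite exp_ln in H0; lra. Qed.

Lemma ln_div' x y : 0 < x -> 0 < y -> ln (x / y) = ln x - ln y.
Proof. intros. unfold Rdiv. rewrite ln_mult; [rewrite ln_Rinv; [lra|auto]|auto|apply Rinv_0_lt_compat; auto]. Qed.

Lemma INRp1_pos k : 0 < INR k + 1.
Proof. pose proof (pos_INR k); lra. Qed.

Lemma harmonic N : ln (INR N + 1) <= rsum (fun k => / (INR k + 1)) N.
Proof. induction N; simpl rsum. simpl. rewrite Rplus_0_l, ln_1; lra.
  rewrite S_INR. pose proof (INRp1_pos N).
  assert (ln (INR N + 1 + 1) - ln (INR N + 1) <= / (INR N + 1)).
  { rewrite <- ln_div' by lra. eapply Rle_trans. apply ln_le_x. apply Rdiv_lt_0_compat; lra.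
    right. field. lra. }
  lra. Qed.

Lemma harmonic_unbounded B : exists N, B < rsum (fun k => / (INR k + 1)) N.
Proof. destruct (archimed (exp (B + 1))) as [A _].
  exists (Z.to_nat (up (exp (B + 1)))). eapply Rlt_le_trans; [|apply harmonic].
  pose proof (exp_pos (B + 1)).
  assert (exp (B + 1) < INR (Z.to_nat (up (exp (B + 1)))) + 1).
  { rewrite INR_IZR_INZ, Z2Nat.id. lra. apply le_IZR. lra. }
  apply exp_lt_inv. rewrite exp_ln by lra. eapply Rlt_trans; [|exact H0].
  apply exp_increasing. lra. Qed.

Lemma psum_step d x : 0 < d -> 0 < x ->
  d * Rpower (x + 1) (- (1 + d)) <= Rpower x (- d) - Rpower (x + 1) (- d).
Proof. intros Hd Hx. unfold Rpower. set (y := x + 1).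
  assert (Hy : 0 < y) by (unfold y; lra).
  set (E := exp (- d * ln y)).
  assert (HE : 0 < E) by apply exp_pos.
  assert (E1 : exp (- (1 + d) * ln y) = E / y).
  { unfold E. replace (- (1 + d) * ln y) with (- d * ln y + - ln y) by ring. rewrite exp_plus.
    rewrite <- ln_Rinv by lra. rewrite exp_ln by (apply Rinv_0_lt_compat; lra). unfold Rdiv; auto. }
  assert (E2 : exp (- d * ln x) = E * exp (d * (ln y - ln x))).
  { unfold E. rewrite <- exp_plus. f_equal. ring. }
  assert (L : 1 / y <= ln y - ln x).
  { pose proof (ln_le_x (x / y) ltac:(apply Rdiv_lt_0_compat; lra)). rewrite ln_div' in H by lra.
    assert (x / y - 1 = - (1 / y)) by (unfold y; field; lra). lra. }
  pose proof (exp_ineq1_le (d * (ln y - ln x))).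
  rewrite E1, E2. fold E.
  assert (d * (1 / y) <= d * (ln y - ln x)) by (apply Rmult_le_compat_l; lra).
  assert (E * (d * (1/y)) <= E * (d * (ln y - ln x))) by (apply Rmult_le_compat_l; lra).
  assert (E * (1 + d * (ln y - ln x)) <= E * exp (d * (ln y - ln x))) by (apply Rmult_le_compat_l; lra).
  replace (d * (E / y)) with (E * (d * (1 / y))) by (field; lra).
  nra. Qed.

Lemma psum_bound d N : 0 < d -> rsum (fun k => Rpower (INR k + 1) (- (1 + d))) N <= 1 + / d.
Proof. intros Hd.
  assert (forall N, rsum (fun k => Rpower (INR k + 1) (- (1 + d))) (S N) <= 1 + (1 - Rpower (INR N + 1) (- d)) / d).
  { induction N0.
    - simpl. unfold Rpower. replace (0+1) with 1 by ring. rewrite ln_1, !Rmult_0_r, exp_0, Rminus_diag.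
      unfold Rdiv. rewrite Rmult_0_l. lra.
    - set (F := fun k => Rpower (INR k + 1) (- (1 + d))) in *.
      change (rsum F (S (S N0))) with (rsum F (S N0) + F (S N0)). unfold F at 2. rewrite S_INR.
      pose proof (psum_step d (INR N0 + 1) Hd (INRp1_pos N0)) as St.
      set (a := Rpower (INR N0 + 1) (- d)) in *. set (b := Rpower (INR N0 + 1 + 1) (- d)) in *.
      set (t := Rpower (INR N0 + 1 + 1) (- (1 + d))) in *.
      assert (t <= (a - b) / d). { apply (Rmult_le_reg_l d); auto. replace (d * ((a - b) / d)) with (a - b) by (field; lra). lra. }
      assert ((1 - b) / d = (1 - a) / d + (a - b) / d) by (field; lra).
      lra. }
  destruct N. simpl. pose proof (Rinv_0_lt_compat d Hd). lra.
  eapply Rle_trans. apply H. assert (0 < Rpower (INR N + 1) (- d)) by apply exp_pos.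
  unfold Rdiv. assert ((1 - Rpower (INR N + 1) (- d)) * / d <= / d).
  { pose proof (Rinv_0_lt_compat d Hd). nra. } lra. Qed.

Section BLK.
Variable H : Hilbert.
Variable e : nat -> H.
Hypothesis He : forall m n, hinner (e m) (e n) = if Nat.eqb m n then C1 else C0.
Variable nb : nat -> nat.
Hypothesis nb_pos : forall k, (1 <= nb k)%nat.

Fixpoint B (k : nat) : nat := match k with O => O | S k' => (B k' + nb k')%nat end.

Lemma B_mono k l : (k < l)%nat -> (B k + nb k <= B l)%nat.
Proof. induction 1; simpl; auto. lia. Qed.
Lemma B_ge k : (k <= B k)%nat.
Proof. induction k; simpl; auto. pose proof (nb_pos k); lia. Qed.

Definition inb j k := andb (Nat.leb (B k) j) (Nat.ltb j (B k + nb k)).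

Lemma inb_true j k : inb j k = true <-> (B k <= j < B k + nb k)%nat.
Proof. unfold inb. rewrite Bool.andb_true_iff, Nat.leb_le, Nat.ltb_lt. tauto. Qed.

Lemma inb_unique j k k' : inb j k = true -> k <> k' -> inb j k' = false.
Proof. intros H1 Hk. apply inb_true in H1. destruct (inb j k') eqn:E; auto. apply inb_true in E.
  destruct (Nat.lt_total k k') as [h|[h|h]]; [|lia|]; pose proof (B_mono _ _ h); lia. Qed.

Definition blk k := vsum (fun i => e (B k + i)%nat) (nb k).

Lemma ip_e_blk j k : hinner (e j) (blk k) = if inb j k then C1 else C0.
Proof. unfold blk. rewrite ip_vsum_r. rewrite (csum_delta _ (j - B k)).
  - rewrite He. destruct (inb j k) eqn:E.
    + apply inb_true in E. replace (Nat.ltb (j - B k) (nb k)) with true by (symmetry; apply Nat.ltb_lt; lia).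
      replace (Nat.eqb j (B k + (j - B k))) with true by (symmetry; apply Nat.eqb_eq; lia). auto.
    + destruct (Nat.ltb (j - B k) (nb k)) eqn:E2; auto.
      apply Nat.ltb_lt in E2. destruct (Nat.eqb j (B k + (j - B k))) eqn:E3; auto.
      apply Nat.eqb_eq in E3. assert (inb j k = true) by (apply inb_true; lia). congruence.
  - intros i Hi. rewrite He. destruct (Nat.eqb j (B k + i)) eqn:E; auto. apply Nat.eqb_eq in E. lia. Qed.

Definition sq k := sqrt (INR (nb k)).
Lemma sq_pos k : 0 < sq k.
Proof. unfold sq. apply sqrt_lt_R0. apply lt_0_INR. pose proof (nb_pos k); lia. Qed.

Definition fb k : H := hscal (RtoC (/ sq k)) (blk k).

Lemma ip_e_fb j k : hinner (e j) (fb k) = if inb j k then RtoC (/ sq k) else C0.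
Proof. unfold fb. rewrite ip_scal_r, ip_e_blk. destruct (inb j k); ceq. Qed.

Lemma fb_on k l : hinner (fb k) (fb l) = if Nat.eqb k l then C1 else C0.
Proof. unfold fb at 1. rewrite hinner_scal_l. unfold blk at 1. rewrite ip_vsum_l.
  destruct (Nat.eqb k l) eqn:E.
  - apply Nat.eqb_eq in E. subst.
    rewrite (csum_ext _ (fun _ => RtoC (/ sq l))).
    + apply Cpx_ext.
      * simpl. rewrite csum_re. simpl. rewrite (rsum_const (/ sq l)).
        pose proof (sq_pos l). assert (sq l * sq l = INR (nb l)) by (unfold sq; apply sqrt_sqrt, pos_INR).
        rewrite <- H1. field. lra.
      * simpl. rewrite csum_re, csum_im. simpl. rewrite (rsum_const (/ sq l)), (rsum_const 0). ring.
    + intros i Hi. rewrite ip_e_fb.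
      replace (inb (B l + i) l) with true by (symmetry; apply inb_true; lia). ceq.
  - rewrite (csum_ext _ (fun _ => C0)).
    + apply Cpx_ext; simpl; rewrite ?csum_re, ?csum_im; simpl; rewrite (rsum_const 0); ring.
    + intros i Hi. rewrite ip_e_fb.
      replace (inb (B k + i) l) with false. ceq.
      symmetry. apply (inb_unique _ k). apply inb_true; lia. apply Nat.eqb_neq; auto. Qed.

End BLK.

Lemma Rpower_pos x y : 0 < Rpower x y.
Proof. apply exp_pos. Qed.
Lemma Rpower_inv x y : 0 < x -> Rpower (/ x) y = / Rpower x y.
Proof. intros. unfold Rpower. rewrite ln_Rinv by auto. rewrite <- exp_Ropp. f_equal. ring. Qed.
Lemma rpow_pos x y : 0 < x -> rpow x y = Rpower x y.
Proof. intros. unfold rpow. destruct (Rle_dec x 0); auto. lra. Qed.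
Lemma rpow_ge0 x y : 0 <= rpow x y.
Proof. unfold rpow. destruct (Rle_dec x 0); [lra|]. left; apply Rpower_pos. Qed.

Section NUM.
Variable p : R.
Hypothesis Hp : 2 < p.

Definition cc (k : nat) := Rpower (/ (INR k + 1)) (/ p).

Lemma cc_pos k : 0 < cc k.
Proof. apply Rpower_pos. Qed.
Lemma cc_dec k : cc (S k) < cc k.
Proof. unfold cc. apply Rlt_Rpower_l. apply Rinv_0_lt_compat; lra. split.
  apply Rinv_0_lt_compat. pose proof (INRp1_pos (S k)); lra.
  apply Rinv_lt_contravar. pose proof (INRp1_pos k); pose proof (INRp1_pos (S k)); nra. rewrite S_INR; lra. Qed.
Lemma cc_pow k : Rpower (cc k) p = / (INR k + 1).
Proof. unfold cc. rewrite Rpower_mult. replace (/ p * p) with 1 by (field; lra).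
  apply Rpower_1. apply Rinv_0_lt_compat, INRp1_pos. Qed.
Lemma cc_pow2 k a : Rpower (cc k) a = Rpower (INR k + 1) (- (a / p)).
Proof. unfold cc. rewrite Rpower_mult, Rpower_inv by apply INRp1_pos. rewrite Rpower_Ropp. f_equal. f_equal. field. lra. Qed.

Lemma cc_lim : Un_cv cc 0.
Proof. intros eps He. set (t := Rpower eps p). assert (0 < t) by apply Rpower_pos.
  destruct (archimed (/ t)) as [A _]. assert (0 < / t) by (apply Rinv_0_lt_compat; auto).
  exists (Z.to_nat (up (/ t))). intros n Hn. unfold Rdist. rewrite Rminus_0_r, Rabs_right by (left; apply cc_pos).
  apply le_INR in Hn. rewrite INR_IZR_INZ, Z2Nat.id in Hn by (apply le_IZR; lra).
  assert (/ (INR n + 1) < t).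
  { rewrite <- (Rinv_inv t). apply Rinv_lt_contravar. apply Rmult_lt_0_compat; auto. apply INRp1_pos. lra. }
  unfold cc. replace eps with (Rpower t (/ p)).
  apply Rlt_Rpower_l. apply Rinv_0_lt_compat; lra. split; auto. apply Rinv_0_lt_compat, INRp1_pos.
  unfold t. rewrite Rpower_mult. replace (p * / p) with 1 by (field; lra). apply Rpower_1; auto. Qed.

Lemma cc_lp eps : 0 < eps -> in_lp (p + eps) cc.
Proof. intros He. exists (1 + / (eps / p)). intros N. rewrite sum_f_R0_rsum.
  eapply Rle_trans; [|apply (psum_bound (eps / p) (S N)); apply Rdiv_lt_0_compat; lra].
  right. apply rsum_ext; intros. rewrite Rabs_right by (left; apply cc_pos). rewrite rpow_pos by apply cc_pos.
  rewrite cc_pow2. f_equal. field. lra. Qed.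

Lemma cc_not_lp s : (forall k, cc k <= s k) -> ~ in_lp p s.
Proof. intros Hs [M HM]. destruct (harmonic_unbounded M) as [N HN].
  specialize (HM N). rewrite sum_f_R0_rsum in HM.
  assert (rsum (fun k => / (INR k + 1)) N <= rsum (fun n => rpow (Rabs (s n)) p) (S N)).
  { apply Rle_trans with (rsum (fun n => rpow (Rabs (s n)) p) N); [|apply rsum_mono; [intros; apply rpow_ge0|lia]].
    apply rsum_le; intros. pose proof (Hs i) as h. pose proof (cc_pos i).
    rewrite Rabs_right by lra. rewrite rpow_pos by lra. rewrite <- cc_pow.
    apply Rle_Rpower_l; lra. }
  lra. Qed.

End NUM.

Section LIN.
Variable H : Hilbert.
Variable T : H -> H.
Hypothesis HT : linear_op T.

Lemma lin_add x y : T (hadd x y) = hadd (T x) (T y).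
Proof. rewrite <- (hscal_1 H x) at 1. rewrite HT, hscal_1. auto. Qed.
Lemma lin_zero : T hzero = hzero.
Proof. apply ip_ext. intros z. pose proof (lin_add hzero hzero). rewrite hadd_0 in H0.
  pose proof (f_equal (fun v => hinner v z) H0). simpl in H1. rewrite hinner_add_l in H1.
  rewrite ip_zero_l. pose proof (f_equal cre H1). pose proof (f_equal cim H1). simpl in *.
  apply Cpx_ext; simpl; lra. Qed.
Lemma lin_scal a x : T (hscal a x) = hscal a (T x).
Proof. rewrite <- (hadd_0 H (hscal a x)). rewrite HT, lin_zero, hadd_0. auto. Qed.
End LIN.

Lemma ip_ext_r (H : Hilbert) (u v : H) : (forall z, hinner z u = hinner z v) -> u = v.
Proof. intros. apply ip_ext. intros z. rewrite (ip_conj _ u), (ip_conj _ v), H0. auto. Qed.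

Lemma nodup_le1 (l : list nat) : NoDup l -> (forall x y, In x l -> In y l -> x = y) -> (length l <= 1)%nat.
Proof. intros Hn Hs. destruct l as [|a [|b t]]; simpl; auto. exfalso.
  inversion Hn; subst. apply H1. left. apply Hs; simpl; auto. Qed.

Section MAIN.
Variable H : Hilbert.
Variable f : nat -> H.
Hypothesis Hf : forall i j, hinner (f i) (f j) = if Nat.eqb i j then C1 else C0.
Variable c : nat -> R.
Hypothesis c_pos : forall k, 0 < c k.
Hypothesis c_dec : forall k, c (S k) < c k.
Hypothesis c_lim : Un_cv c 0.
Local Notation S := (Sop H f Hf c c_pos c_dec c_lim).

Lemma Cn2_mulconj a b : Cn2 (Cmul a (Cconj b)) = Cn2 a * Cn2 b.
Proof. unfold Cn2; simpl; ring. Qed.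

Lemma S_eigen_seq : eigen_seq S c.
Proof. split; [intros; left; apply c_pos|]. split; [intros; left; apply c_dec|].
  intros r Hr k.
  assert (Hchar_idx : (exists idx : list nat, length idx = k /\ NoDup idx /\ Forall (fun n => c n = r) idx) <->
                      (k = O \/ (k = 1%nat /\ exists j, c j = r))).
  { split.
    - intros [idx [L [N F]]]. rewrite Forall_forall in F.
      assert (length idx <= 1)%nat.
      { apply nodup_le1; auto. intros. apply (c_inj c c_dec). rewrite (F x H0), (F y H1); auto. }
      destruct idx as [|a t]; simpl in *; [left; lia|]. right. split; [lia|]. exists a. apply F; left; auto.
    - intros [K|[K [j Hj]]]; subst.
      + exists nil. simpl. repeat split; auto. constructor.
      + exists (j :: nil). simpl. split; auto. split. constructor; [simpl; tauto|constructor]. constructor; auto. }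
  assert (Hchar_eig : (exists l : list H, length l = k /\ orthonormal_eigvecs H S r l) <->
                      (k = O \/ (k = 1%nat /\ exists j, c j = r))).
  { split.
    - intros [l [L [E Orth]]].
      destruct (classic (exists j, c j = r)) as [[j Hj]|Hn].
      + destruct l as [|v0 [|v1 t]]; simpl in L; [left; lia| right; split; [lia|exists j; auto]|].
        exfalso. subst r.
        assert (Hv0 := E v0 (or_introl eq_refl)). assert (Hv1 := E v1 (or_intror (or_introl eq_refl))).
        apply eig_one in Hv0. apply eig_one in Hv1.
        pose proof (Orth 0%nat 0%nat ltac:(simpl; lia) ltac:(simpl; lia)) as O00.
        pose proof (Orth 1%nat 1%nat ltac:(simpl; lia) ltac:(simpl; lia)) as O11.
        pose proof (Orth 0%nat 1%nat ltac:(simpl; lia) ltac:(simpl; lia)) as O01.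
        simpl in O00, O11, O01.
        rewrite Hv0 in O00 at 1 2. rewrite Hv1 in O11 at 1 2. rewrite Hv0, Hv1 in O01.
        rewrite hinner_scal_l, ip_scal_r, Hf, Nat.eqb_refl in O00, O11, O01.
        set (a0 := hinner v0 (f j)) in *. set (a1 := hinner v1 (f j)) in *.
        assert (Cn2 (Cmul a0 (Cconj a0)) = 1) by (replace (Cmul a0 (Cconj a0)) with C1 by (rewrite <- O00; ceq); unfold Cn2; simpl; ring).
        assert (Cn2 (Cmul a1 (Cconj a1)) = 1) by (replace (Cmul a1 (Cconj a1)) with C1 by (rewrite <- O11; ceq); unfold Cn2; simpl; ring).
        assert (Cn2 (Cmul a0 (Cconj a1)) = 0) by (replace (Cmul a0 (Cconj a1)) with C0 by (rewrite <- O01; ceq); unfold Cn2; simpl; ring).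
        rewrite !Cn2_mulconj in *. nra.
      + destruct l as [|v0 t]; simpl in L; [left; lia|]. exfalso.
        assert (Hv0 := E v0 (or_introl eq_refl)).
        assert (v0 = hzero). { apply (eig_none H f Hf c c_pos c_dec c_lim v0 r); auto. intros k' h; apply Hn; exists k'; auto. }
        pose proof (Orth 0%nat 0%nat ltac:(simpl; lia) ltac:(simpl; lia)) as O00. simpl in O00.
        rewrite H0, ip_zero_l in O00. pose proof (f_equal cre O00). simpl in H1. lra.
    - intros [K|[K [j Hj]]]; subst.
      + exists nil. split; auto. split. intros v []. intros i j' Hi; simpl in Hi; lia.
      + exists (f j :: nil). split; auto. split.
        * intros v [<-|[]]. apply Sop_eig.
        * intros i j' Hi Hj'. simpl in Hi, Hj'. destruct i; [|lia]. destruct j'; [|lia]. simpl. rewrite Hf, Nat.eqb_refl; auto. }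
  rewrite Hchar_idx, Hchar_eig. tauto. Qed.


Lemma sv_hit s : singular_values S s -> forall k, exists n, s n = c k.
Proof. intros [Ts [A [Had [[AL [Asa [Apos Asq]]] Heig]]]] k.
  assert (HT : Ts (S (f k)) = hscal (RtoC (c k * c k)) (f k)).
  { apply ip_ext_r. intros z. rewrite <- Had, Sop_eig, ip_scal_r, Sop_f, ip_scal_r.
    unfold bc. ceq. }
  set (w := hadd (A (f k)) (hscal (RtoC (c k)) (f k))).
  assert (Aw : A w = hscal (RtoC (c k)) w).
  { unfold w. rewrite lin_add, lin_scal, Asq, HT by auto. apply ip_ext; intros z.
    rewrite !hinner_add_l, !hinner_scal_l, hinner_add_l, hinner_scal_l. ceq. }
  assert (wnz : cre (hinner w w) <> 0).
  { intro h. assert (w = hzero) by (apply hinner_def; rewrite ip_self_C, h; ceq).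
    pose proof (f_equal (fun v => cre (hinner v (f k))) H0). simpl in H1. unfold w in H1.
    rewrite hinner_add_l, hinner_scal_l, Hf, Nat.eqb_refl, ip_zero_l in H1. simpl in H1.
    pose proof (Apos (f k)). pose proof (c_pos k). lra. }
  pose proof (hinner_pos H w).
  set (v := hscal (RtoC (/ sqrt (cre (hinner w w)))) w).
  assert (Hsq : sqrt (cre (hinner w w)) * sqrt (cre (hinner w w)) = cre (hinner w w)) by (apply sqrt_sqrt; lra).
  assert (Hsp : 0 < sqrt (cre (hinner w w))) by (apply sqrt_lt_R0; lra).
  destruct Heig as [_ [_ Heig]].
  destruct (proj2 (Heig (c k) (c_pos k) 1%nat)) as [idx [L [_ F]]].
  { exists (v :: nil). split; auto. split.
    - intros u [<-|[]]. unfold v. rewrite lin_scal, Aw, !hscal_mul by auto. f_equal. ceq.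
    - intros i j Hi Hj. simpl in Hi, Hj. destruct i; [|lia]. destruct j; [|lia]. simpl.
      unfold v. rewrite hinner_scal_l, ip_scal_r, ip_self_C. apply Cpx_ext; simpl; [|ring].
      set (sw := sqrt (cre (hinner w w))) in *. rewrite <- Hsq. field. lra. }
  destruct idx as [|n t]; simpl in L; [lia|]. exists n. inversion F; auto. Qed.

Lemma sv_ge s : singular_values S s -> forall k, c k <= s k.
Proof. intros Hsv. pose proof (sv_hit s Hsv) as Hh.
  destruct Hsv as [Ts [A [_ [_ [_ [Hmon _]]]]]].
  assert (Hm : forall m n, (m <= n)%nat -> s n <= s m).
  { intros m n h; induction h; [lra|]. pose proof (Hmon m0); lra. }
  set (g := fun k => proj1_sig (constructive_indefinite_description _ (Hh k))).
  assert (Hg : forall k, s (g k) = c k).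
  { intros. unfold g. destruct (constructive_indefinite_description _ _); auto. }
  assert (Hgi : forall k, (g k < g (Datatypes.S k))%nat).
  { intros k. destruct (Nat.lt_ge_cases (g k) (g (Datatypes.S k))); auto.
    pose proof (Hm _ _ H0). rewrite !Hg in H1. pose proof (c_dec k). lra. }
  assert (Hge : forall k, (k <= g k)%nat).
  { induction k; [lia|]. pose proof (Hgi k); lia. }
  intros k. rewrite <- Hg. apply Hm, Hge. Qed.

End MAIN.

Lemma geom K : rsum (fun k => (/ 2) ^ k) K = 2 - 2 * (/ 2) ^ K.
Proof. induction K; simpl rsum. simpl; lra. rewrite IHK. simpl. lra. Qed.

Lemma pow_ge1 q k : (1 <= q)%nat -> (1 <= q ^ k)%nat.
Proof. intros; induction k; simpl; nia. Qed.

Section FIN.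
Variable H : Hilbert.
Variable e : nat -> H.
Hypothesis He : forall m n, hinner (e m) (e n) = if Nat.eqb m n then C1 else C0.
Variable p : R.
Hypothesis Hp : 2 < p.
Variable q : nat.
Hypothesis Hq1 : (1 <= q)%nat.
Hypothesis Hq2 : 2 <= Rpower (INR q) (p / 2 - 1).

Definition nbq k := (q ^ k)%nat.
Lemma nbq_pos k : (1 <= nbq k)%nat.
Proof. apply pow_ge1; auto. Qed.

Local Notation f := (fb H e nbq).
Local Notation Hf := (fb_on H e He nbq nbq_pos).
Local Notation S := (Sop H f Hf (cc p) (cc_pos p) (cc_dec p Hp) (cc_lim p Hp)).

Lemma Se_norm j k : inb nbq j k = true -> cre (hinner (S (e j)) (S (e j))) = cc p k * cc p k * / (sq nbq k * sq nbq k).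
Proof. intros Hin. symmetry. eapply UL_sequence; [|apply Sop_norm].
  apply (Un_cv_ev (fun _ => cc p k * cc p k * / (sq nbq k * sq nbq k)) _ _ (Datatypes.S k)); [|apply Un_cv_const].
  intros n Hn. rewrite (rsum_delta _ k).
  - replace (Nat.ltb k n) with true by (symmetry; apply Nat.ltb_lt; lia). unfold ax. rewrite (ip_e_fb H e He), Hin.
    unfold Cn2; simpl. field. pose proof (sq_pos nbq nbq_pos k). lra.
  - intros i Hi. unfold ax. rewrite (ip_e_fb H e He). rewrite (inb_unique nbq j k i Hin (not_eq_sym Hi)).
    unfold Cn2; simpl; ring. Qed.

Definition G k := Rpower (cc p k / sq nbq k) p.

Lemma g_blk j k : inb nbq j k = true -> rpow (Rabs (hnorm (S (e j)))) p = G k.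
Proof. intros Hin. unfold hnorm. rewrite (Se_norm j k) by auto.
  pose proof (sq_pos nbq nbq_pos k) as Hsq. pose proof (cc_pos p k) as Hcp.
  replace (cc p k * cc p k * / (sq nbq k * sq nbq k)) with ((cc p k / sq nbq k) * (cc p k / sq nbq k)) by (field; lra).
  assert (0 < cc p k / sq nbq k) by (apply Rdiv_lt_0_compat; auto).
  rewrite sqrt_square by lra. rewrite Rabs_right by lra. rewrite rpow_pos by auto. auto. Qed.

Lemma rsum_blocks K : rsum (fun j => rpow (Rabs (hnorm (S (e j)))) p) (B nbq K) = rsum (fun k => INR (nbq k) * G k) K.
Proof. induction K; simpl; auto. rewrite rsum_split, IHK. f_equal.
  rewrite (rsum_ext _ (fun _ => G K)). rewrite rsum_const; ring.
  intros i Hi. apply g_blk. apply inb_true; auto. lia. Qed.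

Lemma G_bound k : INR (nbq k) * G k <= (/ 2) ^ k.
Proof. set (n := INR (nbq k)). assert (Hn : 0 < n) by (unfold n; apply lt_0_INR; pose proof (nbq_pos k); lia).
  unfold G. pose proof (sq_pos nbq nbq_pos k). pose proof (cc_pos p k).
  unfold Rdiv. rewrite <- Rpower_mult_distr by (auto; apply Rinv_0_lt_compat; auto).
  rewrite cc_pow by auto. rewrite Rpower_inv by auto.
  unfold sq. fold n. rewrite <- Rpower_sqrt by auto. rewrite Rpower_mult.
  replace (/ 2 * p) with (1 + (p / 2 - 1)) by field. rewrite Rpower_plus, Rpower_1 by auto.
  assert (Hq : 0 < INR q) by (apply lt_0_INR; lia).
  assert (E : Rpower n (p / 2 - 1) = Rpower (Rpower (INR q) (p / 2 - 1)) (INR k)).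
  { unfold n, nbq. rewrite pow_INR, <- Rpower_pow by auto. rewrite !Rpower_mult. f_equal. ring. }
  rewrite Rpower_pow in E by (apply Rpower_pos).
  assert (2 ^ k <= Rpower n (p / 2 - 1)). { rewrite E. apply pow_incr. lra. }
  assert (0 < 2 ^ k) by (apply pow_lt; lra).
  pose proof (Rpower_pos n (p / 2 - 1)).
  assert (/ (INR k + 1) <= 1).
  { pose proof (pos_INR k). rewrite <- Rinv_1. apply Rinv_le_contravar; lra. }
  assert (0 < / (INR k + 1)) by (apply Rinv_0_lt_compat, INRp1_pos).
  rewrite pow_inv. pose proof (INRp1_pos k).
  replace (n * (/ (INR k + 1) * / (n * Rpower n (p / 2 - 1)))) with (/ (INR k + 1) * / Rpower n (p / 2 - 1)) by (field; lra).
  assert (/ Rpower n (p / 2 - 1) <= / 2 ^ k) by (apply Rinv_le_contravar; lra).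
  assert (0 < / Rpower n (p / 2 - 1)) by (apply Rinv_0_lt_compat; auto).
  nra. Qed.

Lemma Se_lp : in_lp p (fun n => hnorm (S (e n))).
Proof. exists 2. intros N. rewrite sum_f_R0_rsum.
  apply Rle_trans with (rsum (fun j => rpow (Rabs (hnorm (S (e j)))) p) (B nbq (Datatypes.S N))).
  { apply rsum_mono. intros; apply rpow_ge0. apply B_ge, nbq_pos. }
  rewrite rsum_blocks. apply Rle_trans with (rsum (fun k => (/ 2) ^ k) (Datatypes.S N)).
  apply rsum_le; intros; apply G_bound. rewrite geom. pose proof (pow_lt (/2) (Datatypes.S N) ltac:(lra)). lra. Qed.

End FIN.

Lemma q_exists p : 2 < p -> exists q, (1 <= q)%nat /\ 2 <= Rpower (INR q) (p / 2 - 1).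
Proof. intros Hp. set (g := p / 2 - 1). assert (Hg : 0 < g) by (unfold g; lra).
  set (t := Rpower 2 (/ g)). assert (Ht : 0 < t) by apply Rpower_pos.
  destruct (archimed t) as [A _].
  exists (Z.to_nat (up t)).
  assert (0 <= IZR (up t)) by lra.
  assert (E : INR (Z.to_nat (up t)) = IZR (up t)) by (rewrite INR_IZR_INZ, Z2Nat.id; auto; apply le_IZR; lra).
  split.
  - assert (INR 0 < INR (Z.to_nat (up t))) as h by (simpl; lra). apply INR_lt in h. lia.
  - rewrite E. replace 2 with (Rpower t g).
    + apply Rle_Rpower_l; lra.
    + unfold t. rewrite Rpower_mult. replace (/ g * g) with 1 by (field; lra). apply Rpower_1; lra. Qed.

Theorem proposition6 (H : Hilbert) (p eps : R)
  (Hsep : separable H) (Hinf : infinite_dimensional H)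
  (Hp : 2 < p) (Heps : 0 < eps)
  (e : nat -> H) (He : orthonormal_basis e) :
  exists S : H -> H,
    linear_op S /\ bounded_op S /\
    in_Sp (p + eps) S /\ ~ in_Sp p S /\
    in_lp p (fun n => hnorm (S (e n))).
Proof.
  destruct He as [Heon _].
  destruct (q_exists p Hp) as [q [Hq1 Hq2]].
  set (f := fb H e (nbq q)).
  set (Hf := fb_on H e Heon (nbq q) (nbq_pos q Hq1)).
  exists (Sop H f Hf (cc p) (cc_pos p) (cc_dec p Hp) (cc_lim p Hp)).
  split; [apply Sop_lin|]. split; [apply Sop_bounded|]. split; [|split].
  - split; [apply Sop_compact|]. exists (cc p). split; [|apply cc_lp; auto].
    exists (Sop H f Hf (cc p) (cc_pos p) (cc_dec p Hp) (cc_lim p Hp)), (Sop H f Hf (cc p) (cc_pos p) (cc_dec p Hp) (cc_lim p Hp)).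
    split; [intros x y; apply Sop_sa|]. split; [|apply S_eigen_seq].
    split; [apply Sop_lin|]. split; [intros x y; apply Sop_sa|]. split; [intros; apply Sop_pos|]. intros; auto.
  - intros [_ [s [Hsv Hlp]]]. apply (cc_not_lp p Hp s); auto.
    apply (sv_ge H f Hf (cc p) (cc_pos p) (cc_dec p Hp) (cc_lim p Hp) s Hsv).
  - apply (Se_lp H e Heon p Hp q Hq1 Hq2).
Qed.
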